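(* Let $(S,\mathcal{S})$ be a measurable space, let ${\sf F}\subseteq\mathcal{P}(S)$, and let $\mathcal{E}$ be a $\cap$-stable collection with $\sigma(\mathcal{E})=\mathcal{S}$. If there exist $E_n\in\mathcal{E}\cap {\sf F}$, $n\in\mathbb{N}$, with $S=\bigcup_{n\in\mathbb{N}}E_{n}$, then $\{N^{\sf F}_{E}\mid E\in\mathcal{E}\}$ generates $\mathcal{C}^{\sf F}(\mathcal{S})$, i.e. $\sigma(N^{\sf F}_E\mid E\in\mathcal{E})=\mathcal{C}^{\sf F}(\mathcal{S})$.
   Context: $C(S)$ is the set of countable subsets of $S$. $C^{\sf F}(S)=\{M\in C(S)\mid |M\cap A|<\infty \text{ for all } A\in{\sf F}\}$. For $A\subseteq S$, $N^{\sf F}_A:C^{\sf F}(S)\to\mathbb{N}_0\cup\{\infty\}$, $M\mapsto|M\cap A|$. For nonempty $\mathcal{T}\subseteq\mathcal{P}(S)$, $\mathcal{C}^{\sf F}(\mathcal{T})=\sigma(N^{\sf F}_A\mid A\in\mathcal{T})$, a $\sigma$-field on $C^{\sf F}(S)$. *)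

(* Defs.v *)
From Stdlib Require Import List Classical ClassicalEpsilon.
Import ListNotations.
Set Implicit Arguments.

Definition is_sigma_field {X : Type} (Sig : (X -> Prop) -> Prop) : Prop :=
  Sig (fun _ => True) /\
  (forall A, Sig A -> Sig (fun x => ~ A x)) /\
  (forall A : nat -> X -> Prop, (forall n, Sig (A n)) -> Sig (fun x => exists n, A n x)).

Definition sigma_gen {X : Type} (G : (X -> Prop) -> Prop) : (X -> Prop) -> Prop :=
  fun A => forall Sig, is_sigma_field Sig -> (forall B, G B -> Sig B) -> Sig A.

Definition cap_stable {X : Type} (E : (X -> Prop) -> Prop) : Prop :=
  forall A B, E A -> E B -> E (fun x => A x /\ B x).

Definition countable_set {S : Type} (M : S -> Prop) : Prop :=
  exists f : S -> nat, forall x y, M x -> M y -> f x = f y -> x = y.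

Definition finite_set {S : Type} (M : S -> Prop) : Prop :=
  exists l : list S, forall x, M x -> In x l.

Definition CF {S : Type} (F : (S -> Prop) -> Prop) : Type :=
  { M : S -> Prop | countable_set M /\ forall A, F A -> finite_set (fun x => M x /\ A x) }.

(* Cardinality in N_0 cup {oo}: Some n = n, None = infinity. *)
Definition card_is {S : Type} (P : S -> Prop) (k : option nat) : Prop :=
  match k with
  | Some n => exists l : list S, NoDup l /\ (forall x, In x l <-> P x) /\ length l = n
  | None => ~ finite_set P
  end.

Lemma card_exists {S : Type} (P : S -> Prop) : exists k, card_is P k.
Proof.
  destruct (classic (finite_set P)) as [[l Hl]|Hn].
  -
    assert (H : forall l0 : list S, exists l' : list S, NoDup l' /\
              (forall x, In x l' <-> (In x l0 /\ P x))).
    { induction l0 as [|a l0 IH].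
      - exists []. split; [constructor|]. simpl. tauto.
      - destruct IH as [l' [Hnd Hin]].
        destruct (classic (P a /\ ~ In a l')) as [[Pa Na]|Hc].
        + exists (a :: l'). split; [constructor; auto|].
          intros x; simpl; rewrite Hin. split.
          * intros [<-|[? ?]]; tauto.
          * intros [[<-|?] ?]; tauto.
        + exists l'. split; auto. intros x; rewrite Hin; simpl. split.
          * tauto.
          * intros [[<-|?] ?]; [|tauto].
            apply NNPP; intro Hx. apply Hc. split; auto. rewrite Hin. tauto. }
    destruct (H l) as [l' [Hnd Hin]].
    exists (Some (length l')). exists l'. repeat split; auto.
    + intros Hx. apply Hin in Hx. tauto.
    + intros Hx. apply Hin. auto.
  - exists None. exact Hn.
Qed.

Definition ncard {S : Type} (P : S -> Prop) : option nat :=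
  proj1_sig (constructive_indefinite_description _ (card_exists P)).

Definition N_F {S : Type} (F : (S -> Prop) -> Prop) (A : S -> Prop) (M : CF F) : option nat :=
  ncard (fun x => proj1_sig M x /\ A x).

(* sigma(N^F_A | A in T): generated by the preimages N_A^{-1}(B),
   B any subset of N_0 cup {oo} (discrete sigma-field). *)
Definition CF_sigma {S : Type} (F : (S -> Prop) -> Prop) (T : (S -> Prop) -> Prop)
  : (CF F -> Prop) -> Prop :=
  sigma_gen (fun Z => exists (A : S -> Prop) (B : option nat -> Prop),
                T A /\ forall M, Z M <-> B (@N_F S F A M)).

(* Main.v *)
Require Import Defs.
From Stdlib Require Import List Classical ClassicalEpsilon FunctionalExtensionality PropExtensionality Lia Arith.
Import ListNotations.

Lemma set_ext {X : Type} (A B : X -> Prop) : (forall x, A x <-> B x) -> A = B.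
Proof. intro H. apply functional_extensionality; intro x. apply propositional_extensionality; auto. Qed.

Lemma Sig_ext {X : Type} (Sig : (X -> Prop) -> Prop) A B : Sig A -> (forall x, A x <-> B x) -> Sig B.
Proof. intros HA H. rewrite <- (set_ext _ _ H). exact HA. Qed.

Section SigmaLemmas.
Context {X : Type} (Sig : (X -> Prop) -> Prop) (HS : is_sigma_field Sig).

Lemma sig_full : Sig (fun _ => True). Proof. destruct HS as [H _]; exact H. Qed.
Lemma sig_compl A : Sig A -> Sig (fun x => ~ A x). Proof. destruct HS as [_ [H _]]; apply H. Qed.
Lemma sig_union (A : nat -> X -> Prop) : (forall n, Sig (A n)) -> Sig (fun x => exists n, A n x).
Proof. destruct HS as [_ [_ H]]; apply H. Qed.
Lemma sig_empty : Sig (fun _ => False).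
Proof. eapply Sig_ext. apply sig_compl, sig_full. simpl; tauto. Qed.
Lemma sig_and_const (P : Prop) A : Sig A -> Sig (fun x => P /\ A x).
Proof. intro H. destruct (classic P) as [p|np].
 - eapply Sig_ext; [exact H|]. simpl; tauto.
 - eapply Sig_ext; [exact sig_empty|]. simpl; tauto. Qed.
Lemma sig_forall (A : nat -> X -> Prop) : (forall n, Sig (A n)) -> Sig (fun x => forall n, A n x).
Proof. intro H. eapply Sig_ext.
 - apply (sig_compl (fun x => exists n, ~ A n x)). apply (sig_union (fun n x => ~ A n x)). intro n. apply sig_compl. apply H.
 - intro x; simpl. split.
   + intros Hn n. apply NNPP. intro c. apply Hn. exists n; auto.
   + intros Ha [n Hn]. apply Hn, Ha. Qed.
Lemma sig_inter A B : Sig A -> Sig B -> Sig (fun x => A x /\ B x).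
Proof. intros HA HB. eapply Sig_ext.
 - apply (sig_forall (fun n x => match n with 0 => A x | _ => B x end)). intros [|n]; auto.
 - intro x; split. intro H; split; [apply (H 0)|apply (H 1)]. intros [? ?] [|n]; auto. Qed.
Lemma sig_impl_const (P : Prop) A : Sig A -> Sig (fun x => P -> A x).
Proof. intro H. destruct (classic P) as [p|np].
 - eapply Sig_ext; [exact H|]. simpl; tauto.
 - eapply Sig_ext; [exact sig_full|]. simpl; tauto. Qed.
End SigmaLemmas.

Lemma sigma_gen_sf {X} (G : (X->Prop)->Prop) : is_sigma_field (sigma_gen G).
Proof. split; [|split].
 - intros Sig [h _] _. exact h.
 - intros A HA Sig HS HG. pose proof HS as [_ [h _]]. apply h. apply HA; auto.
 - intros A HA Sig HS HG. pose proof HS as [_ [_ h]]. apply h. intro n. apply HA; auto. Qed.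

Lemma sigma_gen_base {X} (G : (X->Prop)->Prop) A : G A -> sigma_gen G A.
Proof. intros HA Sig _ HG. auto. Qed.

Definition is_dynkin {X} (D : (X->Prop)->Prop) : Prop :=
  D (fun _ => True) /\
  (forall A B, D A -> D B -> (forall x, B x -> A x) -> D (fun x => A x /\ ~ B x)) /\
  (forall A : nat -> X -> Prop, (forall n, D (A n)) -> (forall n x, A n x -> A (S n) x) ->
     D (fun x => exists n, A n x)).

Section PiLambda.
Context {X : Type} (E : (X->Prop)->Prop) (HE : cap_stable E).
Definition Lgen (A : X -> Prop) : Prop := forall D, is_dynkin D -> (forall B, E B -> D B) -> D A.

Lemma Lgen_dynkin : is_dynkin Lgen.
Proof. split; [|split].
 - intros D [h _] _. exact h.
 - intros A B HA HB Hsub D HD HED. pose proof HD as [h1 [h2 h3]]. apply h2; [apply HA|apply HB|]; auto.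
 - intros A HA Hm D HD HED. pose proof HD as [h1 [h2 h3]]. apply h3; auto. intro n; apply HA; auto.
Qed.

Lemma Lgen_E B : E B -> Lgen B.
Proof. intros HB D _ H. auto. Qed.

Lemma slice C : Lgen C -> is_dynkin (fun A => Lgen (fun x => A x /\ C x)).
Proof. intro HC. pose proof Lgen_dynkin as [h1 [h2 h3]]. split; [|split].
 - eapply Sig_ext; [exact HC|]. simpl; tauto.
 - intros A B HA HB Hsub. eapply Sig_ext.
   + apply (h2 _ _ HA HB). intros x [? ?]; split; auto.
   + intro x; simpl. specialize (Hsub x). tauto.
 - intros A HA Hm. eapply Sig_ext.
   + apply (h3 (fun n x => A n x /\ C x)); auto. intros n x [? ?]; split; auto.
   + intro x; simpl. split; [intros [n [? ?]]|intros [[n ?] ?]]; eauto.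
Qed.

Lemma Lgen_cap_E B C : E C -> Lgen B -> Lgen (fun x => B x /\ C x).
Proof. intros HC HB. apply (HB (fun A => Lgen (fun x => A x /\ C x))).
 - apply slice, Lgen_E, HC.
 - intros B' HB'. apply Lgen_E, HE; auto. Qed.

Lemma Lgen_cap B C : Lgen C -> Lgen B -> Lgen (fun x => B x /\ C x).
Proof. intros HC HB. apply (HB (fun A => Lgen (fun x => A x /\ C x))).
 - apply slice, HC.
 - intros B' HB'. eapply Sig_ext. apply (Lgen_cap_E C B' HB' HC). simpl; tauto. Qed.

Lemma Lgen_sf : is_sigma_field Lgen.
Proof. pose proof Lgen_dynkin as [h1 [h2 h3]].
 assert (Hc : forall A, Lgen A -> Lgen (fun x => ~ A x)).
 { intros A HA. eapply Sig_ext. apply (h2 _ _ h1 HA); auto. simpl; tauto. }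
 assert (Hu : forall A B, Lgen A -> Lgen B -> Lgen (fun x => A x \/ B x)).
 { intros A B HA HB. eapply Sig_ext. apply (Hc (fun x => ~ A x /\ ~ B x)), Lgen_cap; apply Hc; auto.
   intro x; simpl. tauto. }
 split; [exact h1|split; [exact Hc|]].
 intros A HA.
 assert (HU : forall m, Lgen (fun x => exists i, i <= m /\ A i x)).
 { induction m.
   - eapply Sig_ext. apply (HA 0). intro x; split.
     + intro; exists 0; auto.
     + intros [i [Hi Ai]]. assert (i = 0) by lia; subst; auto.
   - eapply Sig_ext. apply (Hu _ _ IHm (HA (S m))). intro x; split.
     + intros [[i [Hi Ai]]|H]; [exists i; split; auto|exists (S m); auto].
     + intros [i [Hi Ai]]. destruct (Nat.eq_dec i (S m)); [subst; auto|].
       left; exists i; split; auto; lia. }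
 eapply Sig_ext. apply (h3 _ HU).
 - intros n x [i [Hi Ai]]. exists i; split; auto.
 - intro x; split.
   + intros [n [i [_ Ai]]]; eauto.
   + intros [i Ai]. exists i, i; auto.
Qed.

Lemma pi_lambda D A : is_dynkin D -> (forall B, E B -> D B) -> sigma_gen E A -> D A.
Proof. intros HD HED HA. apply (HA Lgen Lgen_sf Lgen_E); auto. Qed.
End PiLambda.

Lemma card_ext {T} (P Q : T -> Prop) o : (forall x, P x <-> Q x) -> card_is P o -> card_is Q o.
Proof. intros H. destruct o as [n|]; simpl.
 - intros [l [Hnd [Hin Hlen]]]. exists l. split; auto. split; auto. intro x. rewrite Hin. apply H.
 - intros Hn [l Hl]. apply Hn. exists l. intros x Px. apply Hl, H, Px. Qed.

Lemma card_unique {T} (P : T -> Prop) a b : card_is P (Some a) -> card_is P (Some b) -> a = b.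
Proof. intros [l1 [N1 [I1 L1]]] [l2 [N2 [I2 L2]]]. subst.
 apply Nat.le_antisymm; apply NoDup_incl_length; auto; intros x Hx.
 - apply I2, I1, Hx.
 - apply I1, I2, Hx. Qed.

Lemma card_add {T} (P Q : T -> Prop) b c : card_is (fun x => P x /\ Q x) (Some b) ->
  card_is (fun x => P x /\ ~ Q x) (Some c) -> card_is P (Some (b + c)).
Proof. intros [l1 [N1 [I1 L1]]] [l2 [N2 [I2 L2]]]. exists (l1 ++ l2). split; [|split].
 - apply NoDup_app; auto. intros x H1 H2. apply I1 in H1. apply I2 in H2. tauto.
 - intro x. rewrite in_app_iff, I1, I2. split; [tauto|]. intro Px. destruct (classic (Q x)); tauto.
 - rewrite length_app; lia. Qed.

Lemma fin_count {T} (P : T -> Prop) : finite_set P -> exists k, card_is P (Some k).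
Proof. intro Hf. destruct (card_exists P) as [[k|] Hk]; eauto. simpl in Hk; contradiction. Qed.

Lemma finite_sub {T} (P R : T -> Prop) : (forall x, P x -> R x) -> finite_set R -> finite_set P.
Proof. intros H [l Hl]. exists l. auto. Qed.

Lemma card_fin {T} (P : T -> Prop) k : card_is P (Some k) -> finite_set P.
Proof. intros [l [_ [I _]]]. exists l. intros x Px; apply I, Px. Qed.

Lemma sub_same_card {T} (P R : T -> Prop) k : (forall x, P x -> R x) -> card_is P (Some k) ->
  card_is R (Some k) -> forall x, R x -> P x.
Proof. intros Hs [l1 [N1 [I1 L1]]] [l2 [N2 [I2 L2]]] x Rx. apply NNPP; intro nP.
 assert (Hnd : NoDup (x :: l1)). { constructor; auto. intro H; apply nP, I1, H. }
 assert (Hinc : incl (x :: l1) l2). { intros y [<-|Hy]; apply I2; auto. apply Hs, I1, Hy. }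
 pose proof (NoDup_incl_length Hnd Hinc) as H. simpl in H. lia. Qed.

Lemma ncard_some {T} (P : T -> Prop) k : ncard P = Some k <-> card_is P (Some k).
Proof. unfold ncard. destruct (constructive_indefinite_description _ (card_exists P)) as [o Ho]; simpl. split.
 - intros ->; exact Ho.
 - intro H. destruct o as [j|].
   + f_equal. eapply card_unique; eauto.
   + exfalso. apply Ho. destruct H as [l [_ [I _]]]. exists l. intros x Px; apply I, Px. Qed.

Lemma mono_le {T} (P : nat -> T -> Prop) (mono : forall m x, P m x -> P (S m) x) m m' x :
  m <= m' -> P m x -> P m' x.
Proof. induction 1; auto. Qed.

Lemma max_index {T} (P : nat -> T -> Prop) (mono : forall m x, P m x -> P (S m) x) :
  forall l : list T, (forall x, In x l -> exists m, P m x) -> exists m, forall x, In x l -> P m x.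
Proof. induction l as [|a l IH]; intros H.
 - exists 0. intros x [].
 - destruct (H a (or_introl eq_refl)) as [m1 H1].
   destruct IH as [m2 H2]. { intros x Hx; apply H; right; auto. }
   exists (Nat.max m1 m2). intros x [<-|Hx].
   + apply (mono_le P mono m1); auto; lia.
   + apply (mono_le P mono m2); auto; lia. Qed.

Lemma stab {T} (P : nat -> T -> Prop) (mono : forall m x, P m x -> P (S m) x) k :
  card_is (fun x => exists m, P m x) (Some k) <->
  exists m, forall m', m <= m' -> card_is (P m') (Some k).
Proof. split.
 - intros Hc. pose proof Hc as [l [N [I L]]].
   destruct (max_index P mono l) as [m Hm]. { intros x Hx. apply I, Hx. }
   exists m. intros m' Hle. eapply card_ext; [|exact Hc]. intro x; split.
   + intro Hx. apply (mono_le P mono m m'); auto. apply Hm, I, Hx.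
   + intro; eauto.
 - intros [m Hm]. eapply card_ext; [|apply (Hm m (le_n m))]. intro x; split.
   + intro; eauto.
   + intros [j Hj].
     apply (sub_same_card (P m) (P (Nat.max m j)) k).
     * intros y; apply mono_le; auto; lia.
     * apply Hm; auto.
     * apply Hm; lia.
     * apply (mono_le P mono j); [lia| exact Hj].
Qed.

Section Main.
Context (Sty : Type) (SS : (Sty -> Prop) -> Prop)
  (F : (Sty -> Prop) -> Prop) (E : (Sty -> Prop) -> Prop)
  (HSS : is_sigma_field SS)
  (HEcap : cap_stable E)
  (HEgen : forall A, sigma_gen E A <-> SS A)
  (En : nat -> Sty -> Prop)
  (HEnE : forall n, E (En n))
  (HEnF : forall n, F (En n))
  (Hcover : forall x : Sty, exists n, En n x).

Definition cnt (P : Sty -> Prop) (M : CF F) (k : nat) :=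
  card_is (fun x => proj1_sig M x /\ P x) (Some k).

Lemma cnt_ext P Q M k : (forall x, P x <-> Q x) -> cnt P M k <-> cnt Q M k.
Proof. intro H. unfold cnt. split; apply card_ext; intro x; specialize (H x); tauto. Qed.

Lemma HSig : is_sigma_field (@CF_sigma Sty F E).
Proof. apply sigma_gen_sf. Qed.

Lemma E_meas A : E A -> forall k, @CF_sigma Sty F E (fun M => cnt A M k).
Proof. intros HA k. apply sigma_gen_base. exists A, (fun o => o = Some k). split; auto.
 intro M. unfold N_F, cnt. symmetry; apply ncard_some. Qed.

Lemma fin_En n M P : (forall x, P x -> En n x) -> exists c, cnt P M c.
Proof. intro H. apply fin_count.
 destruct (proj2 (proj2_sig M) (En n) (HEnF n)) as [l Hl]. exists l.
 intros x [Mx Px]; apply Hl; split; auto. Qed.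

Definition Dn n A := forall k, @CF_sigma Sty F E (fun M => cnt (fun x => A x /\ En n x) M k).

Lemma Dn_dynkin n : is_dynkin (Dn n).
Proof. split; [|split].
 - intro k. eapply Sig_ext. apply (E_meas _ (HEnE n) k). intro M. apply cnt_ext. tauto.
 - intros A B HA HB Hsub k. eapply Sig_ext.
   + apply (sig_union _ HSig (fun j M => cnt (fun x => B x /\ En n x) M j /\
            cnt (fun x => A x /\ En n x) M (j + k))).
     intro j. apply sig_inter; auto. apply HSig.
   + intro M. split.
     * intros [j [Hb Ha]].
       destruct (fin_En n M (fun x => (A x /\ ~ B x) /\ En n x)) as [c Hc]. { tauto. }
       assert (Hs := card_add (fun x => proj1_sig M x /\ (A x /\ En n x)) B j c).
       assert (j + k = j + c).
       { eapply card_unique. exact Ha. apply Hs.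
         - eapply card_ext; [|exact Hb]. intro x; specialize (Hsub x); tauto.
         - eapply card_ext; [|exact Hc]. intro x; tauto. }
       assert (k = c) by lia. subst; exact Hc.
     * intro Hk.
       destruct (fin_En n M (fun x => B x /\ En n x)) as [j Hj]. { tauto. }
       exists j. split; auto.
       eapply card_ext; [|apply (card_add (fun x => proj1_sig M x /\ (A x /\ En n x)) B j k)].
       { intro; tauto. }
       -- eapply card_ext; [|exact Hj]. intro x; specialize (Hsub x); tauto.
       -- eapply card_ext; [|exact Hk]. intro x; tauto.
 - intros A HA Hm k. eapply Sig_ext.
   + apply (sig_union _ HSig (fun m M => forall m', m <= m' -> cnt (fun x => A m' x /\ En n x) M k)).
     intro m. apply (sig_forall _ HSig). intro m'. apply (sig_impl_const _ HSig). apply HA.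
   + intro M. unfold cnt.
     rewrite <- (stab (fun m x => proj1_sig M x /\ (A m x /\ En n x))).
     * split; apply card_ext; intro x; split.
       -- intros [m [? [? ?]]]; split; [|split]; eauto.
       -- intros [? [[m ?] ?]]; exists m; auto.
       -- intros [? [[m ?] ?]]; exists m; auto.
       -- intros [m [? [? ?]]]; split; [|split]; eauto.
     * intros m x [? [? ?]]; split; [|split]; auto.
Qed.

Lemma SS_Dn n A : SS A -> Dn n A.
Proof. intro HA. apply HEgen in HA. apply (pi_lambda E HEcap); auto.
 - apply Dn_dynkin.
 - intros B HB k. apply E_meas. apply HEcap; auto. Qed.

Definition G m x := exists i, i <= m /\ En i x.

Lemma G_S m x : G (S m) x <-> G m x \/ En (S m) x.
Proof. split.
 - intros [i [Hi Ai]]. destruct (Nat.eq_dec i (S m)); [subst; auto|].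
   left; exists i; split; auto; lia.
 - intros [[i [Hi Ai]]|H]; [exists i; split; auto|exists (S m); auto]. Qed.

Lemma SS_base A : sigma_gen E A -> SS A.
Proof. apply HEgen. Qed.

Lemma SS_G m : SS (G m).
Proof. eapply Sig_ext. apply (sig_union _ HSS (fun i x => i <= m /\ En i x)).
 intro i. apply (sig_and_const _ HSS). apply SS_base, sigma_gen_base, HEnE.
 intro; reflexivity. Qed.

Lemma SS_G_meas m : forall A, SS A -> forall k, @CF_sigma Sty F E (fun M => cnt (fun x => A x /\ G m x) M k).
Proof. induction m; intros A HA k.
 - eapply Sig_ext. apply (SS_Dn 0 A HA k). intro M. apply cnt_ext. intro x. split.
   + intros [? ?]; split; auto; exists 0; auto.
   + intros [? [i [Hi ?]]]. assert (i = 0) by lia; subst; auto.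
 - assert (HD : Dn (S m) (fun x => A x /\ ~ G m x)).
   { apply SS_Dn. apply (sig_inter _ HSS); auto. apply (sig_compl _ HSS), SS_G. }
   eapply Sig_ext.
   + apply (sig_union _ HSig (fun j M => cnt (fun x => A x /\ G m x) M j /\
        exists c, j + c = k /\ cnt (fun x => (A x /\ ~ G m x) /\ En (S m) x) M c)).
     intro j. apply (sig_inter _ HSig); auto. apply (sig_union _ HSig). intro c.
     apply (sig_and_const _ HSig). apply HD.
   + intro M. assert (HGS := G_S m). assert (HGm : forall x, G m x -> G (S m) x).
     { intros x Hx; apply HGS; auto. }
     split.
     * intros [j [Hj [c [Hjc Hc]]]]. subst k.
       eapply card_ext; [|apply (card_add (fun x => proj1_sig M x /\ (A x /\ G (S m) x)) (G m) j c)].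
       { intro; tauto. }
       -- eapply card_ext; [|exact Hj]. intro x. specialize (HGm x); tauto.
       -- eapply card_ext; [|exact Hc]. intro x. specialize (HGS x). tauto.
     * intro Hk. assert (Hf := card_fin _ _ Hk).
       destruct (fin_count (fun x => proj1_sig M x /\ (A x /\ G m x))) as [j Hj].
       { eapply finite_sub; [|exact Hf]. intro x; specialize (HGm x); tauto. }
       destruct (fin_count (fun x => proj1_sig M x /\ ((A x /\ ~ G m x) /\ En (S m) x))) as [c Hc].
       { eapply finite_sub; [|exact Hf]. intro x; specialize (HGS x); tauto. }
       exists j. split; auto. exists c. split; auto.
       eapply card_unique; [|exact Hk].
       eapply card_ext; [|apply (card_add (fun x => proj1_sig M x /\ (A x /\ G (S m) x)) (G m) j c)].
       { intro; tauto. }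
       -- eapply card_ext; [|exact Hj]. intro x. specialize (HGm x); tauto.
       -- eapply card_ext; [|exact Hc]. intro x. specialize (HGS x). tauto.
Qed.

Lemma SS_meas A : SS A -> forall k, @CF_sigma Sty F E (fun M => cnt A M k).
Proof. intros HA k. eapply Sig_ext.
 - apply (sig_union _ HSig (fun m M => forall m', m <= m' -> cnt (fun x => A x /\ G m' x) M k)).
   intro m. apply (sig_forall _ HSig). intro m'. apply (sig_impl_const _ HSig). apply SS_G_meas, HA.
 - intro M. unfold cnt.
   rewrite <- (stab (fun m x => proj1_sig M x /\ (A x /\ G m x))).
   + split; apply card_ext; intro x; split.
     * intros [m [? [? ?]]]; split; auto.
     * intros [? ?]. destruct (Hcover x) as [n Hn]. exists n. split; [|split]; auto. exists n; auto.
     * intros [? ?]. destruct (Hcover x) as [n Hn]. exists n. split; [|split]; auto. exists n; auto.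
     * intros [m [? [? ?]]]; split; auto.
   + intros m x [? [? [i [Hi ?]]]]; split; [|split]; auto. exists i; split; auto.
Qed.

Lemma SS_NF A : SS A -> forall B, @CF_sigma Sty F E (fun M => B (N_F A M)).
Proof. intros HA B.
 assert (Hs : forall k, @CF_sigma Sty F E (fun M => N_F A M = Some k)).
 { intro k. eapply Sig_ext. apply (SS_meas A HA k). intro M. unfold cnt, N_F.
   symmetry; apply ncard_some. }
 assert (Hn : @CF_sigma Sty F E (fun M => N_F A M = None)).
 { eapply Sig_ext. apply (sig_compl _ HSig (fun M => exists k, N_F A M = Some k)), (sig_union _ HSig (fun k M => N_F A M = Some k)), Hs.
   intro M. split.
   - intro H. destruct (N_F A M) as [k|] eqn:Ho; [exfalso; apply H; exists k; reflexivity|reflexivity].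
   - intros H [k Hk]. rewrite H in Hk. discriminate. }
 eapply Sig_ext.
 - apply (sig_union _ HSig (fun n M => B (match n with 0 => None | S k => Some k end) /\
      N_F A M = match n with 0 => None | S k => Some k end)).
   intro n. apply (sig_and_const _ HSig). destruct n; auto.
 - intro M. split.
   + intros [n [Hb He]]. rewrite He; auto.
   + intro Hb. destruct (N_F A M) as [k|] eqn:Ho.
     * exists (S k). auto.
     * exists 0. auto.
Qed.

Lemma main_equiv : forall Z : CF F -> Prop, @CF_sigma Sty F E Z <-> @CF_sigma Sty F SS Z.
Proof. intro Z; split.
 - intros HZ Sig HS HG. apply HZ; auto. intros B [A [Bo [HA HB]]]. apply HG.
   exists A, Bo; split; auto. apply (proj1 (HEgen A)). apply sigma_gen_base. exact HA.
 - intro HZ. apply HZ. apply HSig. intros B [A [Bo [HA HB]]]. eapply Sig_ext.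
   apply (SS_NF A HA Bo). intro M; symmetry; apply HB.
Qed.
End Main.

Theorem theorem4p1 (S : Type) (SS : (S -> Prop) -> Prop)
  (F : (S -> Prop) -> Prop) (E : (S -> Prop) -> Prop)
  (HSS : is_sigma_field SS)
  (HEcap : cap_stable E)
  (HEgen : forall A, sigma_gen E A <-> SS A)
  (En : nat -> S -> Prop)
  (HEnE : forall n, E (En n))
  (HEnF : forall n, F (En n))
  (Hcover : forall x, exists n, En n x) :
  forall Z : CF F -> Prop, @CF_sigma S F E Z <-> @CF_sigma S F SS Z.
Proof.
  intros Z. eapply main_equiv; eassumption.
Qed.
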